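(* For any nonempty valid set $T$, there exist a finite set $R_T$ and a number $n_T$ such that $\mathcal{S}_T(n)\subseteq R_T$ for all $n\ge n_T$.
   Context: For relatively prime positive integers $\alpha,\beta$ and positive integers $a_1,a_2$, the $(\alpha,\beta)$-walk $w^{\alpha,\beta}_k(a_1,a_2)$ is given by $w_1=a_1$, $w_2=a_2$, $w_{k+2}=\alpha w_{k+1}+\beta w_k$ ($k\ge1$). For a positive integer $n$, $s^{\alpha,\beta}(n;a_1,a_2)$ is the (largest) index $s$ with $w^{\alpha,\beta}_s(a_1,a_2)=n$ ($-\infty$ if none), and $s^{\alpha,\beta}(n)=\max_{a_1,a_2\ge1}s^{\alpha,\beta}(n;a_1,a_2)$. A set $T$ is valid if $T\subseteq\{(\alpha,\beta):\alpha,\beta\ge1,\gcd(\alpha,\beta)=1\}$. For valid $T$ define $\bar s_T(n)=\max_{(\alpha,\beta)\in T}s^{\alpha,\beta}(n)$ and $\mathcal{S}_T(n)=\{(\alpha,\beta)\in T:s^{\alpha,\beta}(n)=\bar s_T(n)\}$. *)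

(* Defs.v *)
From mathcomp Require Import all_boot.
Set Implicit Arguments. Unset Strict Implicit. Unset Printing Implicit Defensive.

(* The (alpha,beta)-walk, indexed from 1:  walk_{al,be} a1 a2 1 = a1,
   walk 2 = a2, walk (k+2) = al * walk (k+1) + be * walk k.
   We compute consecutive pairs (w_k, w_{k+1}); index 0 is a dummy. *)
Fixpoint walk_pair (al be a1 a2 : nat) (k : nat) : nat * nat :=
  match k with
  | 0 => (a1, a2)            (* pair for index 1 *)
  | k'.+1 => let p := walk_pair al be a1 a2 k' in (p.2, al * p.2 + be * p.1)
  end.

(* w^{al,be}_k(a1,a2) for k >= 1 (value at k = 0 is irrelevant). *)
Definition walk (al be a1 a2 k : nat) : nat := (walk_pair al be a1 a2 k.-1).1.

Definition is_max (P : nat -> Prop) (m : nat) : Prop :=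
  P m /\ forall k, P k -> k <= m.

Definition valid (T : nat * nat -> Prop) : Prop :=
  forall p, T p -> 0 < p.1 /\ 0 < p.2 /\ coprime p.1 p.2.

(* indices s >= 1 with w^{al,be}_s(a1,a2) = n for some a1, a2 >= 1;
   s^{al,be}(n) = max_{a1,a2} s^{al,be}(n;a1,a2) is the maximum of this set
   (equivalently, the max over a1,a2 of the largest such index). *)
Definition hit_index (al be n s : nat) : Prop :=
  exists a1 a2, 0 < a1 /\ 0 < a2 /\ 0 < s /\ walk al be a1 a2 s = n.

Definition s_ab (al be n m : nat) : Prop := is_max (hit_index al be n) m.

Definition sbar (T : nat * nat -> Prop) (n m : nat) : Prop :=
  is_max (fun v => exists p, T p /\ s_ab p.1 p.2 n v) m.

Definition S_T (T : nat * nat -> Prop) (n : nat) (p : nat * nat) : Prop :=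
  T p /\ exists m, s_ab p.1 p.2 n m /\ sbar T n m.

(* Main.v *)
Require Import Defs.
From mathcomp Require Import all_boot zify.
From Stdlib Require Import Classical.

Fixpoint U (al be k : nat) : nat :=
  match k with 0 => 0 | 1 => 1 | (k'.+1 as k1).+1 => al * U al be k1 + be * U al be k' end.

Lemma U_SS al be k : U al be k.+2 = al * U al be k.+1 + be * U al be k.
Proof. by []. Qed.

Lemma walk_pairU al be a1 a2 k : walk_pair al be a1 a2 k.+1 =
  (be * U al be k * a1 + U al be k.+1 * a2, be * U al be k.+1 * a1 + U al be k.+2 * a2).
Proof.
elim: k => [|k IH]; first by rewrite /= /U; congr pair; lia.
have -> : walk_pair al be a1 a2 k.+2 = ((walk_pair al be a1 a2 k.+1).2, al * (walk_pair al be a1 a2 k.+1).2 + be * (walk_pair al be a1 a2 k.+1).1) by [].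
rewrite IH (U_SS al be k.+1) (U_SS al be k); cbn [fst snd]; congr pair; nia.
Qed.

Lemma walkU al be a1 a2 k : walk al be a1 a2 k.+2 = be * U al be k * a1 + U al be k.+1 * a2.
Proof. by rewrite /walk -[k.+2.-1]/(k.+1) walk_pairU. Qed.

Lemma U_step al be k : 0 < al -> U al be k <= U al be k.+1.
Proof. case: k => [|k] hal //; rewrite U_SS; nia. Qed.

Lemma U_le al be i j : 0 < al -> i <= j -> U al be i <= U al be j.
Proof.
move=> hal; elim: j => [|j IH]; first by rewrite leqn0 => /eqP ->.
rewrite leq_eqVlt => /orP [/eqP -> //| hij].
exact: leq_trans (IH hij) (U_step al be j hal).
Qed.

Lemma U_grow al be j : 0 < al -> (al + be) ^ j <= U al be j.*2.+1.
Proof.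
move=> hal; elim: j => [|j IH] //.
rewrite doubleS U_SS expnS.
have := U_step al be j.*2.+1 hal; nia.
Qed.

Lemma U_ub al be k : 0 < al -> (al + be) ^ k.+1 >= U al be k.+1 /\ (al + be) ^ k >= U al be k.
Proof.
move=> hal; elim: k => [|k [IH1 IH2]]; first by rewrite expn1 expn0 /=; lia.
split=> //; rewrite U_SS expnS.
have : (al+be)^k <= (al+be)^k.+1.
  case: (posnP (al+be)) => h; first by nia.
  by rewrite leq_pexp2l.
nia.
Qed.

Lemma U_coprime al be k : coprime al be -> coprime (be * U al be k) (U al be k.+1).
Proof.
move=> hco; elim: k => [|k IH]; first by rewrite muln0.
rewrite U_SS coprimeMl; apply/andP; split.
  rewrite addnC mulnC /coprime gcdnMDl -/(coprime _ _) coprimeMr.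
  rewrite coprime_sym hco /=.
  by move: IH; rewrite coprimeMl => /andP [].
by rewrite /coprime gcdnMDl -/(coprime _ _) coprime_sym.
Qed.
Lemma repr A B n : 0 < A -> 0 < B -> coprime A B -> (A + 1) * (B + 1) <= n ->
  exists a1 a2, 0 < a1 /\ 0 < a2 /\ A * a1 + B * a2 = n.
Proof.
move=> hA hB hco hn.
have /(coprimeP _ hA) [[u1 u2] /= H] := hco.
have E1 : u1 * A = u2 * B + 1 by lia.
have hx0 : 0 < u1 * n by nia.
have [q [x [Ex [hx1 hxB]]]] : exists q x, u1 * n = q * B + x /\ 0 < x /\ x <= B.
  have hd := divn_eq (u1 * n) B; have hm := ltn_pmod (u1 * n) hB.
  move: hd hm; set q := (u1 * n) %/ B; set r := (u1 * n) %% B; move: q r => q r hd hm.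
  case: (posnP r) => h0.
    exists q.-1, B; split => //; rewrite h0 addn0 in hd.
    have hq : 0 < q by case: q hd => [|q'] //; rewrite mul0n => hd; rewrite hd in hx0.
    rewrite hd; case: q hq {hd} => //= q' _; nia.
  exists q, r; split => //; split => //; exact: ltnW.
have E2 : A * q * B + A * x = u2 * n * B + n.
  have : A * (u1 * n) = u2 * n * B + n by rewrite mulnA (mulnC A) E1; nia.
  rewrite Ex; nia.
set P := A * q in E2; set Q := u2 * n in E2.
have hAx : A * x <= A * B by rewrite leq_mul2l hxB orbT.
have hPQ : Q < P.
  rewrite ltnNge; apply/negP => hle.
  have : P * B <= Q * B by rewrite leq_mul2r hle orbT.
  nia.
exists x, (P - Q); split => //; split; first by lia.
rewrite mulnBr; nia.
Qed.

Lemma max_exists (P : nat -> Prop) k B : P k -> (forall s, P s -> s <= B) ->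
  exists m, is_max P m.
Proof.
move=> Pk Hb.
suff : forall d, (forall s, P s -> s <= k + d) -> exists m, is_max P m.
  by move=> /(_ (B - k)); apply => s /Hb; lia.
elim => [|d IH] Hd.
  by exists k; split => // s /Hd; rewrite addn0.
case: (classic (P (k + d.+1))) => h.
  by exists (k + d.+1).
apply: IH => s Ps; have := Hd s Ps; rewrite leq_eqVlt => /orP [/eqP E|]; last by rewrite addnS.
by rewrite E in Ps.
Qed.

Lemma hit_bound al be n s : 0 < al -> hit_index al be n s ->
  exists j, s <= j * 2 + 3 /\ (al + be) ^ j <= n.
Proof.
move=> hal [a1 [a2 [h1 [h2 [hs E]]]]].
case: s hs E => [|[|t]] // _ E.
  by exists 0; split => //; rewrite expn0 -E /walk /=.
exists t./2; split.
  have := odd_double_half t; rewrite -muln2; case: (odd t) => /=; lia.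
rewrite -E walkU.
have h3 : U al be (t./2).*2.+1 <= U al be t.+1.
  apply: U_le => //; have := odd_double_half t; case: (odd t) => /=; lia.
have := U_grow al be (t./2) hal; nia.
Qed.

Theorem theorem5p1 (T : nat * nat -> Prop) :
  valid T -> (exists p, T p) ->
  exists (R : seq (nat * nat)) (nT : nat),
    forall n, 0 < n -> nT <= n ->
      forall p, S_T T n p -> p \in R.
Proof.
move=> HV [[a0 b0] HT0]; have [/= ha0 [/= hb0 hco0]] := HV _ HT0.
set c := a0 + b0; set K := c ^ 8.
have hc : 2 <= c by rewrite /c; lia.
exists [seq (x, y) | x <- iota 0 K, y <- iota 0 K], (c ^ 12).
move=> n npos hn [al be] [HTp [m [Hsm Hsbar]]].
have [/= hal [/= hbe hcoP]] := HV _ HTp.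
case: (ltnP (al + be) K) => hK.
  by apply: allpairs_f; rewrite mem_iota /=; lia.
exfalso.
have [j [hmj hjn]] := hit_bound al be n m hal Hsm.1.
have hKj : c ^ (j * 8) <= n.
  apply: leq_trans hjn; rewrite mulnC expnM.
  case: (posnP j) => [->|hj0]; first by rewrite !expn0.
  by rewrite leq_exp2r.
have hcn : c ^ (j * 4 + 8) <= n.
  case: (leqP 2 j) => hj.
    apply: leq_trans hKj; rewrite leq_pexp2l //; [lia | lia].
  apply: leq_trans hn; rewrite leq_pexp2l //; [lia | lia].
set k := j * 2 + 2.
have hk1 : 1 <= k by rewrite /k; lia.
have hU1 : 1 <= U a0 b0 k by exact: (U_le a0 b0 1 k ha0 hk1).
have [hUb1 hUb2] := U_ub a0 b0 k ha0; rewrite -/c in hUb1 hUb2.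
have hA : b0 * U a0 b0 k + 1 <= c ^ k.+2.
  have hb0c : b0 <= c by rewrite /c; lia.
  have := leq_mul hb0c hUb2; rewrite -expnS.
  have : 1 <= c ^ k.+1 by rewrite expn_gt0; lia.
  rewrite [c ^ k.+2]expnS; move: (c ^ k.+1) => X; nia.
have hB : U a0 b0 k.+1 + 1 <= c ^ k.+2.
  have : 1 <= c ^ k.+1 by rewrite expn_gt0; lia.
  rewrite [c ^ k.+2]expnS; move: (c ^ k.+1) hUb1 => X; nia.
have hAB : (b0 * U a0 b0 k + 1) * (U a0 b0 k.+1 + 1) <= n.
  apply: leq_trans hcn; have -> : j * 4 + 8 = k.+2 + k.+2 by rewrite /k; lia.
  rewrite expnD; exact: leq_mul.
have [a1 [a2 [h1 [h2 Ea]]]] := repr (b0 * U a0 b0 k) (U a0 b0 k.+1) n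
  (ltac:(rewrite muln_gt0 hb0; done)) (ltac:(have := U_step a0 b0 k ha0; lia))
  (U_coprime a0 b0 k hco0) hAB.
have hhit : hit_index a0 b0 n k.+2.
  by exists a1, a2; do 3!split => //; rewrite walkU -Ea.
have hbnd : forall s, hit_index a0 b0 n s -> s <= n * 2 + 3.
  move=> s hs; have [j' [h1' h2']] := hit_bound a0 b0 n s ha0 hs.
  have : j' < c ^ j' by exact: ltn_expl.
  rewrite -/c in h2'; lia.
have [v hv] := max_exists (hit_index a0 b0 n) (k.+2) (n * 2 + 3) hhit hbnd.
have hvm : v <= m by apply: Hsbar.2; exists (a0, b0); split.
have := hv.2 _ hhit; rewrite /k in hvm *; lia.
Qed.
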